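(* Let $G=KB(H)$ for some triangle-free graph $H$. If $I$ is an independent set of $G$ with $|I|=n\ge 3$ such that $\left|\bigcap_{v\in I}N_G(v)\right|\ge 3$, then $\left|\bigcup_{v\in I}N_G(v)\right|>n$.
   Context: All graphs are finite and simple. A biclique of a graph $H$ is a set $P\subseteq V(H)$ such that the induced subgraph $H[P]$ is a complete bipartite graph with both parts nonempty, and $P$ is inclusion-maximal with this property. The biclique graph $KB(H)$ has the set of bicliques of $H$ as vertex set, two distinct bicliques being adjacent iff they intersect. $N_G(v)$ denotes the (open) neighbourhood of $v$ in $G$. *)

(* Defs.v *)
From mathcomp Require Import all_boot.
Set Implicit Arguments. Unset Strict Implicit. Unset Printing Implicit Defensive.

Section Graph.
Variables (T : finType) (e : rel T).

Definition simple_graph : Prop := symmetric e /\ irreflexive e.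

Definition triangle_free : Prop :=
  forall x y z : T, e x y -> e y z -> e z x -> False.

Definition complete_bipartite_induced (P : {set T}) : bool :=
  [exists X : {set T}, exists Y : {set T},
    [&& X :|: Y == P, X :&: Y == set0, X != set0, Y != set0 &
        [forall x in P, forall y in P,
          e x y == ((x \in X) && (y \in Y)) || ((x \in Y) && (y \in X))]]].

Definition biclique (P : {set T}) : bool :=
  complete_bipartite_induced P &&
  [forall Q : {set T}, (P \subset Q) && complete_bipartite_induced Q ==> (Q == P)].

(* Biclique graph KB(H): vertices are bicliques, adjacent iff distinct
   and intersecting. *)
Definition KB_adj (P Q : {set T}) : Prop := P != Q /\ P :&: Q != set0.

Definition KB_nbhd (v : {set T}) : {set {set T}} :=
  [set Q : {set T} | biclique Q && (Q != v) && (Q :&: v != set0)].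

Definition KB_independent (I : {set {set T}}) : Prop :=
  (forall v, v \in I -> biclique v) /\
  (forall v w, v \in I -> w \in I -> v != w -> ~ KB_adj v w).

End Graph.

(* Main.v *)
Require Import Defs.
From mathcomp Require Import all_boot.
Set Implicit Arguments. Unset Strict Implicit. Unset Printing Implicit Defensive.

Section Proof4.
Variables (T : finType) (e : rel T).
Hypothesis esym : symmetric e.
Hypothesis eirr : irreflexive e.
Hypothesis tf : triangle_free e.

Definition Nb (x : T) : {set T} := [set y | e x y].
Definition CN (A : {set T}) : {set T} := [set z | [forall y in A, e z y]].
Definition star x := CN (Nb x) :|: Nb x.

Lemma inNb x y : (y \in Nb x) = e x y.
Proof. by rewrite inE. Qed.

Lemma inCN (A : {set T}) z : reflect (forall y, y \in A -> e z y) (z \in CN A).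
Proof. rewrite inE; exact: forall_inP. Qed.

Lemma inStar x y : (y \in star x) = (y \in CN (Nb x)) || e x y.
Proof. by rewrite /star inE inNb. Qed.

Lemma star_self x : x \in star x.
Proof. by rewrite inStar; apply/orP; left; apply/inCN => y; rewrite inNb. Qed.

Definition parts (P X Y : {set T}) : Prop :=
  [/\ X :|: Y = P, X :&: Y = set0, X != set0, Y != set0 &
      forall x y, x \in P -> y \in P ->
        e x y = ((x \in X) && (y \in Y)) || ((x \in Y) && (y \in X))].

Lemma cbiP P : complete_bipartite_induced e P -> exists X Y, parts P X Y.
Proof.
case/existsP=> X /existsP [Y /and5P [/eqP h1 /eqP h2 h3 h4 /forallP h5]].
exists X, Y; split=> // x y xP yP.
by have /implyP/(_ xP)/forallP/(_ y)/implyP/(_ yP)/eqP := h5 x.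
Qed.

Lemma partsC P X Y : parts P X Y -> parts P Y X.
Proof.
case=> h1 h2 h3 h4 h5; split=> //; first by rewrite setUC.
  by rewrite setIC.
by move=> x y xP yP; rewrite h5 // orbC.
Qed.

Lemma cbiI P X Y : parts P X Y -> complete_bipartite_induced e P.
Proof.
case=> h1 h2 h3 h4 h5; apply/existsP; exists X; apply/existsP; exists Y.
rewrite h1 h2 !eqxx h3 h4 /=; apply/forallP=> x; apply/implyP=> xP.
by apply/forallP=> y; apply/implyP=> yP; rewrite h5.
Qed.

Lemma parts_disj P X Y x : parts P X Y -> x \in X -> x \in Y -> False.
Proof. case=> _ h2 _ _ _ xX xY. by have := in_set0 x; rewrite -h2 inE xX xY. Qed.

Lemma bic_max (P Q : {set T}) : biclique e P -> P \subset Q -> complete_bipartite_induced e Q -> Q = P.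
Proof. case/andP=> _ /forallP/(_ Q)/implyP h sPQ cQ. by apply/eqP; apply: h; rewrite sPQ cQ. Qed.

Lemma bic_common B u w : biclique e B -> u \in B -> w \in B ->
  e u w \/ exists2 t, t \in B & e u t /\ e w t.
Proof.
case/andP=> /cbiP [X [Y hp]] _ uB wB.
case: (hp) => h1 h2 /set0Pn [x0 x0X] /set0Pn [y0 y0Y] h5.
have x0B : x0 \in B by rewrite -h1 inE x0X.
have y0B : y0 \in B by rewrite -h1 inE y0Y orbT.
have mXY z : z \in B -> (z \in X) || (z \in Y) by rewrite -h1 inE.
case/orP: (mXY u uB) => [uX|uY]; case/orP: (mXY w wB) => [wX|wY].
- by right; exists y0 => //; split; rewrite h5 // ?uX ?wX y0Y.
- by left; rewrite h5 // uX wY.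
- by left; rewrite h5 // uY wX orbT.
- by right; exists x0 => //; split; rewrite h5 // ?uY ?wY x0X orbT.
Qed.

Lemma bic_nb v x : biclique e v -> x \in v -> exists2 q, q \in v & e x q.
Proof.
move=> bv xv.
case: (bic_common bv xv xv) => [|[t tv [xt _]]]; first by rewrite eirr.
by exists t.
Qed.

Lemma CN_sub_aux v X Y x z : biclique e v -> parts v X Y -> x \in X ->
  z \in CN (Nb x) -> z \in v.
Proof.
move=> bv hp xX /inCN zc.
case: (hp) => h1 h2 /set0Pn [x0 x0X] /set0Pn [y0 y0Y] h5.
have inv u : u \in X -> u \in v by move=> uX; rewrite -h1 inE uX.
have inv' u : u \in Y -> u \in v by move=> uY; rewrite -h1 inE uY orbT.
have mXY u : u \in v -> (u \in X) || (u \in Y) by rewrite -h1 inE.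
have zY y : y \in Y -> e z y.
  by move=> yY; apply: zc; rewrite inNb (h5 x y (inv x xX) (inv' y yY)) xX yY.
apply/negPn/negP => zv.
have zY' : (z \in Y) = false by apply/negP => /inv' zv'; rewrite zv' in zv.
have cQ : complete_bipartite_induced e (z |: v).
  apply: (@cbiI _ (z |: X) Y); split.
  - by rewrite -setUA h1.
  - apply/setP=> u; rewrite !inE; apply/negbTE/negP => /andP [/orP [/eqP -> | uX] uY].
      by rewrite zY' in uY.
    exact: (parts_disj hp uX uY).
  - by apply/set0Pn; exists z; rewrite !inE eqxx.
  - by apply/set0Pn; exists y0.
  - have side w : w \in v -> e z w = (w \in Y).
      move=> wv; case/orP: (mXY w wv) => [wX|wY]; last by rewrite zY.
      have wnY : (w \in Y) = false by apply/negP => wY; exact: (parts_disj hp wX wY).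
      rewrite wnY; apply/negP => zw.
      apply: (tf zw (_ : e w y0)); first by rewrite (h5 w y0 wv (inv' y0 y0Y)) wX y0Y.
      by rewrite esym zY.
    have znv u : u \in v -> (u == z) = false.
      by move=> uv; apply/negP => /eqP uz; rewrite -uz uv in zv.
    move=> u w; rewrite !inE => /orP[/eqP->|uv] /orP[/eqP->|wv].
    + by rewrite eqxx eirr zY'.
    + rewrite (side w wv) zY' eqxx.
      by case: (w \in X); case: (w \in Y); case: (w == z).
    + rewrite esym (side u uv) zY' eqxx.
      by case: (u \in X); case: (u \in Y); case: (u == z).
    + by rewrite (h5 u w uv wv) (znv u uv) (znv w wv).
have := bic_max bv (subsetUr _ _) cQ => /setP /(_ z).
by rewrite !inE eqxx (negbTE zv).
Qed.

Lemma CN_sub v x : biclique e v -> x \in v -> CN (Nb x) \subset v.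
Proof.
move=> bv xv; apply/subsetP => z zc.
have [X [Y hp]] := cbiP (andP bv).1.
case: (hp) => h1 _ _ _ _.
have : (x \in X) || (x \in Y) by rewrite -h1 inE in xv.
case/orP => [xX|xY].
  exact: CN_sub_aux hp xX zc.
exact: CN_sub_aux (partsC hp) xY zc.
Qed.

Lemma star_parts x : (exists y, e x y) -> parts (star x) (CN (Nb x)) (Nb x).
Proof.
move=> [y0 xy0].
have nCN u : u \in CN (Nb x) -> e x u = false.
  move=> /inCN h; apply/negP => xu; by have := h u; rewrite inNb eirr => /(_ xu).
split => //.
- apply/setP=> u; rewrite in_setI in_set0 inNb; apply/negbTE/negP => /andP [uc xu].
  by rewrite (nCN u uc) in xu.
- by apply/set0Pn; exists x; apply/inCN => y; rewrite inNb.
- by apply/set0Pn; exists y0; rewrite inNb.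
- move=> u w; rewrite !inStar !inNb => /orP[uc|xu] /orP[wc|xw].
  + rewrite (nCN u uc) (nCN w wc) uc wc /=.
    apply/negbTE/negP => uw.
    have uy : e u y0 by move/inCN: uc; apply; rewrite inNb.
    have wy : e w y0 by move/inCN: wc; apply; rewrite inNb.
    by apply: (tf uw wy); rewrite esym.
  + rewrite uc xw /=; by move/inCN: uc; apply; rewrite inNb.
  + rewrite xu wc /= orbT esym; by move/inCN: wc; apply; rewrite inNb.
  + have uc : (u \in CN (Nb x)) = false by apply/negP => /nCN; rewrite xu.
    have wc : (w \in CN (Nb x)) = false by apply/negP => /nCN; rewrite xw.
    rewrite uc wc /= andbF; apply/negbTE/negP => uw.
    by apply: (tf xu uw); rewrite esym.
Qed.

Lemma star_max_aux x Q X Y : parts Q X Y -> star x \subset Q -> x \in X ->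
  Q \subset star x.
Proof.
move=> hQ sQ xX; case: (hQ) => h1 h2 _ _ h5.
have xQ : x \in Q by apply: (subsetP sQ); exact: star_self.
have xnY : (x \in Y) = false by apply/negP => xY; exact: (parts_disj hQ xX xY).
have Yof y : e x y -> y \in Y.
  move=> xy; have yQ : y \in Q by apply: (subsetP sQ); rewrite inStar xy orbT.
  by move: xy; rewrite (h5 x y xQ yQ) xX xnY /= orbF.
apply/subsetP=> q qQ; rewrite inStar.
have : (q \in X) || (q \in Y) by rewrite -h1 inE in qQ.
case/orP => [qX|qY].
- apply/orP; left; apply/inCN=> y; rewrite inNb => xy.
  have yQ : y \in Q by apply: (subsetP sQ); rewrite inStar xy orbT.
  by rewrite (h5 q y qQ yQ) qX (Yof y xy).
- by apply/orP; right; rewrite (h5 x q xQ qQ) xX qY.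
Qed.

Lemma star_bic x : (exists y, e x y) -> biclique e (star x).
Proof.
move=> hx; have hp := star_parts hx.
apply/andP; split; first exact: cbiI hp.
apply/forallP=> Q; apply/implyP=> /andP[sQ /cbiP [X [Y hQ]]].
rewrite eqEsubset sQ andbT.
have xQ : x \in Q by apply: (subsetP sQ); exact: star_self.
case: (hQ) => h1 _ _ _ _.
have : (x \in X) || (x \in Y) by rewrite -h1 inE in xQ.
case/orP => [xX|xY].
  exact: star_max_aux hQ sQ xX.
exact: star_max_aux (partsC hQ) sQ xY.
Qed.

Lemma star_disj v w x y : biclique e v -> biclique e w -> v :&: w = set0 ->
  x \in v -> y \in w -> star x = star y -> False.
Proof.
move=> bv bw vw xv yw sxy.
have dj u : u \in v -> u \in w -> False.
  by move=> uv uw; have := in_set0 u; rewrite -vw inE uv uw.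
have := star_self y; rewrite -sxy inStar => /orP[/(subsetP (CN_sub bv xv)) yv | xy].
  exact: dj yv yw.
have [q qv xq] := bic_nb bv xv.
have : q \in star x by rewrite inStar xq orbT.
rewrite sxy inStar => /orP[/(subsetP (CN_sub bw yw)) qw | yq].
  exact: dj qv qw.
by apply: (tf xy yq); rewrite esym.
Qed.

Lemma star_other v w a x : biclique e v -> v :&: w = set0 -> a \in v ->
  x \in star a -> x \in w -> e a x.
Proof.
move=> bv vw av; rewrite inStar => /orP [/(subsetP (CN_sub bv av)) xv | //] xw.
by have := in_set0 x; rewrite -vw inE xv xw.
Qed.

Definition Sig (v : {set T}) : {set {set T}} :=
  [set y | [exists x in v, (y == star x) && (star x != v)]].

Lemma Sig_in (v : {set T}) x u : x \in v -> e x u -> u \notin v -> star x \in Sig v.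
Proof.
move=> xv xu uv; rewrite inE; apply/existsP; exists x; rewrite xv eqxx /=.
apply/eqP=> h; move: uv; by rewrite -h inStar xu orbT.
Qed.

Lemma Sig_out v y : y \in Sig v -> exists2 x, x \in v & y = star x /\ star x != v.
Proof. rewrite inE => /existsP [x /andP [xv /andP [/eqP -> nv]]]; by exists x. Qed.

Lemma nbhdP v Q : Q \in KB_nbhd e v -> [/\ biclique e Q, Q != v & Q :&: v != set0].
Proof. by rewrite inE => /andP[/andP[]]. Qed.

Lemma Sig_nbhd v y : biclique e v -> y \in Sig v -> y \in KB_nbhd e v.
Proof.
move=> bv /Sig_out [x xv [-> nv]]; rewrite inE nv andbT.
have [q _ xq] := bic_nb bv xv.
rewrite star_bic; last by exists q.
by apply/set0Pn; exists x; rewrite inE star_self xv.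
Qed.

Lemma sig_ne (v B : {set T}) : biclique e v -> biclique e B -> B != v -> B :&: v != set0 ->
  exists2 x, x \in v & exists2 u, e x u & u \notin v.
Proof.
move=> bv bB nB /set0Pn [w]; rewrite inE => /andP [wB wv].
have : ~~ (B \subset v).
  apply/negP => sBv; move: nB; by rewrite (bic_max bB sBv (andP bv).1) eqxx.
case/subsetPn => u uB uv.
case: (bic_common bB wB uB) => [wu | [t tB [wt ut]]].
- by exists w => //; exists u.
- case tv: (t \in v).
  + by exists t => //; exists u => //; rewrite esym.
  + by exists w => //; exists t => //; rewrite tv.
Qed.

Lemma main (I : {set {set T}}) : KB_independent e I -> 3 <= #|I| ->
  3 <= #|\bigcap_(v in I) KB_nbhd e v| ->
  #|I| < #|\bigcup_(v in I) KB_nbhd e v|.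
Proof.
move=> [Ibic Iind] n3 c3.
set C := \bigcap_(v in I) KB_nbhd e v.
set U := \bigcup_(v in I) KB_nbhd e v.
have dj v w : v \in I -> w \in I -> v != w -> v :&: w = set0.
  move=> vI wI vw; apply/eqP; apply/negPn/negP => h.
  exact: (Iind v w vI wI vw (conj vw h)).
have [B1 [B2 [B1C B2C B12]]] : exists B1 B2, [/\ B1 \in C, B2 \in C & B1 != B2].
  have /card_gt1P [B1 [B2 [h1 h2 h3]]] : 1 < #|C| by apply: leq_trans c3.
  by exists B1, B2.
have B1n := bigcapP B1C; have B2n := bigcapP B2C.
have Sne v : v \in I -> exists y, y \in Sig v.
  move=> vI; have [bB nB iB] := nbhdP (B1n v vI).
  have [x xv [u xu uv]] := sig_ne (Ibic v vI) bB nB iB.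
  by exists (star x); apply: Sig_in xu uv.
pose r v := if [pick y in Sig v] is Some y then y else set0.
have rS v : v \in I -> r v \in Sig v.
  move=> vI; rewrite /r; case: pickP => [y //|h].
  by have [y yS] := Sne v vI; have := h y; rewrite yS.
have Sdj v w y : v \in I -> w \in I -> y \in Sig v -> y \in Sig w -> v = w.
  move=> vI wI yv yw; apply/eqP; apply/negPn/negP => vw.
  have [x xv [yx _]] := Sig_out yv.
  have [x' xw [yx' _]] := Sig_out yw.
  exact: (star_disj (Ibic v vI) (Ibic w wI) (dj v w vI wI vw) xv xw (etrans (Logic.eq_sym yx) yx')).
have rinj : {in I &, injective r}.
  move=> v w vI wI rvw; apply: (Sdj v w (r v) vI wI (rS v vI)); rewrite rvw; exact: rS.
have cR : #|r @: I| = #|I| by apply: card_in_imset.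
have inU v y : v \in I -> y \in Sig v -> y \in U.
  by move=> vI ys; apply/bigcupP; exists v => //; exact: Sig_nbhd (Ibic v vI) ys.
rewrite -cR; apply: proper_card; apply/properP; split.
  by apply/subsetP => y /imsetP [v vI ->]; exact: inU vI (rS v vI).
have notR1 y : (forall v, v \in I -> y \notin Sig v) -> y \notin r @: I.
  move=> h; apply/imsetP => [[v vI yv]]; by move: (h v vI); rewrite yv rS.
have notR2 y v0 : v0 \in I -> y \in Sig v0 -> y != r v0 -> y \notin r @: I.
  move=> v0I yS yr; apply/imsetP => [[v vI yv]].
  have := Sdj v0 v y v0I vI yS; rewrite yv => /(_ (rS v vI)) ev.
  by move: yr; rewrite ev yv eqxx.
have two v y1 y2 : v \in I -> y1 \in Sig v -> y2 \in Sig v -> y1 != y2 ->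
    exists2 y, y \in U & y \notin r @: I.
  move=> vI s1 s2 n12.
  case: (eqVneq y1 (r v)) => [e1|n1].
  - exists y2; first exact: inU s2.
    by apply: (notR2 _ v) => //; rewrite -e1 eq_sym.
  - by exists y1; [exact: inU s1 | exact: notR2 n1].
have [v0 v0I] : exists v, v \in I by apply/card_gt0P; apply: leq_trans n3.
have inUC y : y \in C -> y \in U.
  by move/bigcapP => h; apply/bigcupP; exists v0 => //; exact: h.
case: (boolP [exists v in I, B1 \in Sig v]) => [/exists_inP [v1 v1I S1] | nS1]; last first.
  exists B1; first exact: inUC.
  apply: notR1 => v vI; apply/negP => h; apply: (negP nS1); apply/exists_inP; by exists v.
case: (boolP [exists v in I, B2 \in Sig v]) => [/exists_inP [vk vkI S2] | nS2]; last first.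
  exists B2; first exact: inUC.
  apply: notR1 => v vI; apply/negP => h; apply: (negP nS2); apply/exists_inP; by exists v.
case: (eqVneq v1 vk) => [ev|nvk].
  by apply: (two v1 B1 B2) => //; rewrite ev.
have [a av1 [Ba _]] := Sig_out S1.
have djk := dj v1 vk v1I vkI nvk.
have [_ _ /set0Pn [d]] := nbhdP (B1n vk vkI); rewrite inE => /andP [dB1 dvk].
have ad : e a d by apply: (star_other (Ibic v1 v1I) djk av1 _ dvk); rewrite -Ba.
have notin (u : T) (v w : {set T}) : v :&: w = set0 -> u \in v -> u \notin w.
  by move=> vw uv; apply/negP => uw; have := in_set0 u; rewrite -vw inE uv uw.
have da : e d a by rewrite esym.
have Sd : star d \in Sig vk := Sig_in dvk da (notin a v1 vk djk av1).
case: (eqVneq (star d) B2) => [sdB2 | nd]; last exact: (two vk _ _ vkI Sd S2 nd).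
have [vm] : exists vm, vm \in (I :\ v1) :\ vk.
  apply/card_gt0P; move: n3; rewrite (cardsD1 v1 I) (cardsD1 vk (I :\ v1)) v1I.
  case: (vk \in I :\ v1) => /=; rewrite ?add0n !add1n !ltnS // => h; exact: leq_trans h.
rewrite !inE => /andP [nmk /andP [nm1 vmI]].
have [_ _ /set0Pn [f]] := nbhdP (B1n vm vmI); rewrite inE => /andP[fB1 fvm].
have [_ _ /set0Pn [g]] := nbhdP (B2n vm vmI); rewrite inE => /andP[gB2 gvm].
have n1m : v1 != vm by rewrite eq_sym.
have nkm : vk != vm by rewrite eq_sym.
have dj1m := dj v1 vm v1I vmI n1m.
have djkm := dj vk vm vkI vmI nkm.
have af : e a f by apply: (star_other (Ibic v1 v1I) dj1m av1 _ fvm); rewrite -Ba.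
have dg : e d g by apply: (star_other (Ibic vk vkI) djkm dvk _ gvm); rewrite sdB2.
have fa : e f a by rewrite esym.
have gd : e g d by rewrite esym.
have Sf : star f \in Sig vm := Sig_in fvm fa (notin a v1 vm dj1m av1).
have Sg : star g \in Sig vm := Sig_in gvm gd (notin d vk vm djkm dvk).
apply: (two vm _ _ vmI Sg Sf); apply/eqP => sgf.
have : a \in star f by rewrite inStar esym af orbT.
rewrite -sgf inStar => /orP[/(subsetP (CN_sub (Ibic vm vmI) gvm)) avm | ga].
  by move: (notin a v1 vm dj1m av1); rewrite avm.
exact: (tf ad dg ga).
Qed.

End Proof4.

Theorem theorem4 (T : finType) (e : rel T) (I : {set {set T}}) :
  simple_graph e -> triangle_free e ->
  KB_independent e I -> 3 <= #|I| ->
  3 <= #|\bigcap_(v in I) KB_nbhd e v| ->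
  #|I| < #|\bigcup_(v in I) KB_nbhd e v|.
Proof. by case=> hs hi htf; exact: main. Qed.
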